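(* Let $\ell\in\{1,2\}$ and let ${\cal H}\subset{\cal H}_0$, $a_\ell$, $C_{{\rm G1},\ell}$, $C_{{\rm G2},\ell}$, ${\mathcal A}_\ell$ be as in the context (the standing assumptions there hold). If ${\mathcal A}_\ell^{-1}:{\cal H}^*\to{\cal H}$ exists, then $$\|{\mathcal A}_\ell^{-1}\|_{{\cal H}_0\to{\cal H}}\le\|{\mathcal A}_\ell^{-1}\|_{{\cal H}^*\to{\cal H}}\le (C_{{\rm G1},\ell})^{-1}\Big(1+C_{{\rm G2},\ell}\|{\mathcal A}_\ell^{-1}\|_{{\cal H}_0\to{\cal H}}\Big)$$ and $$\|{\mathcal A}_\ell^{-1}\|_{{\cal H}_0\to{\cal H}_0}\le\|{\mathcal A}_\ell^{-1}\|_{{\cal H}_0\to{\cal H}}\le (C_{{\rm G1},\ell})^{-1/2}\|{\mathcal A}_\ell^{-1}\|_{{\cal H}_0\to{\cal H}_0}\sqrt{C_{{\rm G2},\ell}+\|{\mathcal A}_\ell^{-1}\|_{{\cal H}_0\to{\cal H}_0}^{-1}}.$$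
   Context: Standing assumptions: ${\cal H}\subset{\cal H}_0$ are complex Hilbert spaces with $\|v\|_{{\cal H}_0}\le\|v\|_{{\cal H}}$ for $v\in{\cal H}$, and ${\cal H}_0$ is identified with its dual so that ${\cal H}\subset{\cal H}_0\subset{\cal H}^*$. ${\mathcal D}:{\cal H}\to{\cal H}_0$ is linear with $\|{\mathcal D}\|_{{\cal H}\to{\cal H}_0}\le 1$; $b(\cdot,\cdot)$ is a continuous sesquilinear form on ${\cal H}$; for $\ell=1,2$, $\mu_\ell^{-1}:{\cal H}_0\to{\cal H}_0$ and $\epsilon_\ell:{\cal H}_0\to{\cal H}_0$ are bounded linear operators, and $a_\ell(u,v):=(\mu_\ell^{-1}{\mathcal D}u,{\mathcal D}v)_{{\cal H}_0}+b(u,v)-(\epsilon_\ell u,v)_{{\cal H}_0}$. For $\ell=1,2$ there exist $C_{{\rm G1},\ell},C_{{\rm G2},\ell}>0$ with $|a_\ell(v,v)+C_{{\rm G2},\ell}\|v\|_{{\cal H}_0}^2|\ge C_{{\rm G1},\ell}\|v\|_{{\cal H}}^2$ for all $v\in{\cal H}$. ${\mathcal A}_\ell:{\cal H}\to{\cal H}^*$ is defined by $\langle{\mathcal A}_\ell u,v\rangle_{{\cal H}^*\times{\cal H}}=a_\ell(u,v)$. For $X\in\{{\cal H}^*,{\cal H}_0\}$, $Y\in\{{\cal H},{\cal H}_0\}$, $\|{\mathcal A}_\ell^{-1}\|_{X\to Y}$ denotes the operator norm of ${\mathcal A}_\ell^{-1}$ restricted to $X$ (using ${\cal H}_0\subset{\cal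 H}^*$) and measured in $Y$. *)

(* Defs.v *)
From HB Require Import structures.
From mathcomp Require Import all_boot all_order all_algebra.
From mathcomp Require Import classical_sets reals complex.
Set Implicit Arguments. Unset Strict Implicit. Unset Printing Implicit Defensive.
Import Order.TTheory GRing.Theory Num.Theory.
Local Open Scope ring_scope.
Local Open Scope classical_set_scope.

Section Hilbert.
Variable R : realType.
Local Notation C := (R[i]).

Definition cconj (z : C) : C := conjc z.
Definition cabs (z : C) : R := ComplexField.Normc.normc z.

Definition clinear (U W : lmodType C) (f : U -> W) : Prop :=
  forall (c : C) (u v : U), f (c *: u + v) = c *: f u + f v.
Definition cantilinear (U : lmodType C) (f : U -> C) : Prop :=
  forall (c : C) (u v : U), f (c *: u + v) = cconj c * f u + f v.

Definition inner_product (V : lmodType C) (ip : V -> V -> C) : Prop :=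
  [/\ forall w, clinear (fun u => ip u w),
      forall u v, ip u v = cconj (ip v u),
      forall v, complex.Im (ip v v) = 0 /\ 0 <= complex.Re (ip v v)
    & forall v, ip v v = 0 -> v = 0].

Definition ipnorm (V : lmodType C) (ip : V -> V -> C) (v : V) : R :=
  Num.sqrt (complex.Re (ip v v)).

Definition ip_complete (V : lmodType C) (ip : V -> V -> C) : Prop :=
  forall u : nat -> V,
    (forall e : R, 0 < e -> exists N : nat, forall m n : nat,
        (N <= m)%N -> (N <= n)%N -> ipnorm ip (u m - u n) < e) ->
    exists l : V, forall e : R, 0 < e -> exists N : nat, forall n : nat,
        (N <= n)%N -> ipnorm ip (u n - l) < e.

Definition hilbert (V : lmodType C) (ip : V -> V -> C) : Prop :=
  inner_product ip /\ ip_complete ip.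

Definition bounded_op (U W : lmodType C) (ipU : U -> U -> C) (ipW : W -> W -> C)
  (f : U -> W) : Prop :=
  clinear f /\ exists M : R, forall u, ipnorm ipW (f u) <= M * ipnorm ipU u.

(* H^* : bounded antilinear functionals on H (so that <Au, v> = a(u, v)
   with a sesquilinear, and H0 embeds via f |-> (f, .)_{H0}) *)
Definition in_dual (V : lmodType C) (ip : V -> V -> C) (f : V -> C) : Prop :=
  cantilinear f /\ exists M : R, forall v, cabs (f v) <= M * ipnorm ip v.

Definition dual_norm (V : lmodType C) (ip : V -> V -> C) (f : V -> C) : R :=
  sup [set cabs (f v) / ipnorm ip v | v in [set v : V | v <> 0]].

(* the embedding H0 -> H^*, f |-> (f, J .)_{H0} where J : H -> H0 is the inclusion *)
Definition embed0 (V V0 : lmodType C) (ip0 : V0 -> V0 -> C) (J : V -> V0)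
  (f : V0) : V -> C := fun v => ip0 f (J v).

Definition aform (V V0 : lmodType C) (ip0 : V0 -> V0 -> C) (J D : V -> V0)
  (b : V -> V -> C) (muinv eps : V0 -> V0) (u v : V) : C :=
  ip0 (muinv (D u)) (D v) + b u v - ip0 (eps (J u)) (J v).

Definition opnorm_dual_H (V : lmodType C) (ip : V -> V -> C)
  (Ainv : (V -> C) -> V) : R :=
  sup [set ipnorm ip (Ainv f) / dual_norm ip f
      | f in [set f | in_dual ip f /\ f <> (fun _ => 0)]].

Definition opnorm_0_H (V V0 : lmodType C) (ip : V -> V -> C)
  (ip0 : V0 -> V0 -> C) (J : V -> V0) (Ainv : (V -> C) -> V) : R :=
  sup [set ipnorm ip (Ainv (embed0 ip0 J f)) / ipnorm ip0 f
      | f in [set f : V0 | f <> 0]].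

Definition opnorm_0_0 (V V0 : lmodType C) (ip0 : V0 -> V0 -> C) (J : V -> V0)
  (Ainv : (V -> C) -> V) : R :=
  sup [set ipnorm ip0 (J (Ainv (embed0 ip0 J f))) / ipnorm ip0 f
      | f in [set f : V0 | f <> 0]].

End Hilbert.

(* Main.v *)
Require Import Defs.
From HB Require Import structures.
From mathcomp Require Import all_boot all_order all_algebra.
From mathcomp Require Import boolp classical_sets reals complex.
From mathcomp Require Import ring lra.
Set Implicit Arguments. Unset Strict Implicit. Unset Printing Implicit Defensive.
Import Order.TTheory GRing.Theory Num.Theory.
Local Open Scope ring_scope.
Local Open Scope classical_set_scope.
Section S.
Variable R : realType.
Local Notation C := (R[i]).
Implicit Types z y : C.
Local Notation Re := complex.Re.
Local Notation Im := complex.Im.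

Lemma scaleC c z : c *: z = c * z :> C.
Proof. reflexivity. Qed.
Lemma cjD z y : conjc (z + y) = conjc z + conjc y.
Proof. by case: z; case: y => *; apply/eqP; rewrite eq_complex /= opprD !eqxx. Qed.
Lemma cjM z y : conjc (z * y) = conjc z * conjc y.
Proof. case: z; case: y => *; apply/eqP; rewrite eq_complex /=; apply/andP; split; apply/eqP; ring. Qed.
Lemma cjN z : conjc (- z) = - conjc z.
Proof. by case: z. Qed.
Lemma cj0 : conjc (0 : C) = 0.
Proof. by apply/eqP; rewrite eq_complex /= oppr0 !eqxx. Qed.
Lemma cjK z : conjc (conjc z) = z.
Proof. by case: z => a b; rewrite /= opprK. Qed.
Lemma cjR (k : R) : conjc (k%:C%C) = k%:C%C.
Proof. by apply/eqP; rewrite eq_complex /= oppr0 !eqxx. Qed.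
Lemma cj1 : conjc (1 : C) = 1.
Proof. by apply/eqP; rewrite eq_complex /= oppr0 !eqxx. Qed.
Lemma ReD z y : Re (z + y) = Re z + Re y.
Proof. by case: z; case: y. Qed.
Lemma ReJ z : Re (conjc z) = Re z.
Proof. by case: z. Qed.
Lemma ReRM (k : R) z : Re (k%:C%C * z) = k * Re z.
Proof. case: z => a b /=; ring. Qed.
Lemma le_sq (a b : R) : 0 <= b -> a ^+ 2 <= b ^+ 2 -> a <= b.
Proof.
move=> hb h; case: (lerP a 0) => ha; first exact: (le_trans ha).
by rewrite -(@ler_pXn2r _ 2) // nnegrE ltW.
Qed.
Lemma sqle (a b : R) : 0 <= a -> a <= b -> a ^+ 2 <= b ^+ 2.
Proof. by move=> ha hab; rewrite (@ler_pXn2r _ 2) // nnegrE //; exact: le_trans hab. Qed.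
Lemma cabsE z : cabs z = Num.sqrt (Re z ^+ 2 + Im z ^+ 2).
Proof. by case: z. Qed.
Lemma cabs_ge0 z : 0 <= cabs z.
Proof. by rewrite cabsE sqrtr_ge0. Qed.
Lemma cabs2 z : cabs z ^+ 2 = Re z ^+ 2 + Im z ^+ 2.
Proof. by rewrite cabsE sqr_sqrtr // addr_ge0 // sqr_ge0. Qed.
Lemma ReX (t : R) z : Re (conjc (- ((t%:C)%C * z)) * z) = - t * cabs z ^+ 2.
Proof. rewrite cabs2; case: z => a b /=; ring. Qed.
Lemma mulcJ z : z * conjc z = ((cabs z ^+ 2)%:C)%C.
Proof. rewrite cabs2; case: z => a b /=. apply/eqP; rewrite eq_complex /=. apply/andP; split; apply/eqP; ring. Qed.
Lemma Re_le_cabs z : Re z <= cabs z.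
Proof.
rewrite cabsE; case: (lerP (Re z) 0) => h; first by apply: (le_trans h); rewrite sqrtr_ge0.
have hz := sqrtr_sqr (Re z); rewrite ger0_norm ?(ltW h) // in hz; rewrite -{1}hz.
by apply: ler_wsqrtr; rewrite lerDl sqr_ge0.
Qed.
Lemma cabsM z y : cabs (z * y) = cabs z * cabs y.
Proof. exact: ComplexField.Normc.normcM. Qed.
Lemma cabsD z y : cabs (z + y) <= cabs z + cabs y.
Proof. exact: le_normcD. Qed.
Lemma cabsJ z : cabs (conjc z) = cabs z.
Proof. by rewrite !cabsE; case: z => a b /=; rewrite sqrrN. Qed.
Lemma cabsN z : cabs (- z) = cabs z.
Proof. exact: normcN. Qed.
Lemma cabsR (k : R) : cabs (k%:C%C) = `|k|.
Proof. by rewrite cabsE /= expr0n addr0 sqrtr_sqr. Qed.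
Lemma cabs_eq0 z : cabs z = 0 -> z = 0.
Proof. exact: ComplexField.Normc.eq0_normc. Qed.
Lemma cabs0 : cabs (0 : C) = 0.
Proof. exact: ComplexField.Normc.normc0. Qed.

Lemma le0_eps (a : R) : (forall e, 0 < e -> a <= e) -> a <= 0.
Proof. by move=> h; apply/ler_addgt0Pr => e he; rewrite add0r; apply: h. Qed.
Lemma small_inv (e : R) : 0 < e -> exists k : nat, (k.+1%:R : R)^-1 < e.
Proof. by move=> he; have [k hk] := ltr_add_invr he; exists k; rewrite add0r in hk. Qed.
Lemma inv_mono (k n : nat) : (k <= n)%N -> (n.+1%:R : R)^-1 <= (k.+1%:R)^-1.
Proof. by move=> h; rewrite lef_pV2 ?posrE ?ltr0Sn // ler_nat. Qed.
Lemma inv_pos (n : nat) : 0 < (n.+1%:R : R)^-1.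
Proof. by rewrite invr_gt0 ltr0Sn. Qed.
Lemma inv_le1 (n : nat) : (n.+1%:R : R)^-1 <= 1.
Proof. have := @inv_mono 0 n (leq0n n). by rewrite invr1. Qed.

Section SupLemmas.
Variable T : Type.
Variables (P : set T) (F : T -> R).
Lemma sup_le_M (M : R) : 0 <= M -> (forall t, P t -> F t <= M) ->
  sup [set F t | t in P] <= M.
Proof.
move=> hM h; have [ne|e] := pselect ([set F t | t in P] !=set0).
  by apply: ge_sup => // y [t ht <-]; apply: h.
have -> : [set F t | t in P] = set0.
  by apply/seteqP; split => // y hy; apply: e; exists y.
by rewrite sup0.
Qed.
Lemma le_sup_el (M : R) t : (forall t, P t -> F t <= M) -> P t ->
  F t <= sup [set F t | t in P].
Proof.
move=> h ht; apply: ub_le_sup; last by exists t.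
by exists M => y [t' ht' <-]; apply: h.
Qed.
Lemma sup_ge0 : (forall t, P t -> 0 <= F t) -> 0 <= sup [set F t | t in P].
Proof.
move=> h; have [hs|hs] := pselect (has_sup [set F t | t in P]); last by rewrite sup_out.
case: hs => [[y [t ht ety]] [M hM]].
apply: le_trans (h t ht) _; apply: (@le_sup_el M) => // t' ht'; apply: hM; by exists t'.
Qed.
End SupLemmas.

Section Lin.
Variables (U W : lmodType C) (F : U -> W).
Hypothesis hF : clinear F.
Lemma lin0 : F 0 = 0.
Proof.
have := hF 1 0 0; rewrite !scale1r addr0 => h.
by apply/esym/(addrI (F 0)); rewrite addr0 {1}h.
Qed.
Lemma linZ c u : F (c *: u) = c *: F u.
Proof. by have := hF c u 0; rewrite addr0 lin0 addr0. Qed.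
Lemma linD u v : F (u + v) = F u + F v.
Proof. by have := hF 1 u v; rewrite !scale1r. Qed.
End Lin.

Lemma realCM (x y : R) : ((x%:C)%C * (y%:C)%C) = ((x * y)%:C)%C.
Proof. by apply/eqP; rewrite eq_complex /= !mulr0 !mul0r subr0 addr0 !eqxx. Qed.

Section IP.
Variable V : lmodType C.
Variable ip : V -> V -> C.
Hypothesis hip : inner_product ip.
Local Notation N := (ipnorm ip).
Implicit Types u v w : V.

Lemma ip_lin w : clinear (fun u => ip u w). Proof. by case: hip => h _ _ _; apply: h. Qed.
Lemma ip_sym u v : ip u v = conjc (ip v u). Proof. by case: hip => _ h _ _; apply: h. Qed.
Lemma ip_pos v : Im (ip v v) = 0 /\ 0 <= Re (ip v v). Proof. by case: hip => _ _ h _; apply: h. Qed.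
Lemma ip_def v : ip v v = 0 -> v = 0. Proof. by case: hip => _ _ _ h; apply: h. Qed.

Lemma ip0l w : ip 0 w = 0.
Proof.
have /= := ip_lin w 1 0 0; rewrite !scale1r addr0 => h.
by apply/esym/(addrI (ip 0 w)); rewrite addr0 {1}h.
Qed.
Lemma ipDl u v w : ip (u + v) w = ip u w + ip v w.
Proof. by have /= := ip_lin w 1 u v; rewrite !scale1r. Qed.
Lemma ipZl c u w : ip (c *: u) w = c * ip u w.
Proof. by have /= := ip_lin w c u 0; rewrite addr0 ip0l addr0 scaleC. Qed.
Lemma ip0r w : ip w 0 = 0.
Proof. by rewrite ip_sym ip0l cj0. Qed.
Lemma ipDr u v w : ip w (u + v) = ip w u + ip w v.
Proof. by rewrite ip_sym ipDl cjD -!ip_sym. Qed.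
Lemma ipZr c u w : ip w (c *: u) = conjc c * ip w u.
Proof. by rewrite ip_sym ipZl cjM -ip_sym. Qed.
Lemma ipNl u w : ip (- u) w = - ip u w.
Proof. by rewrite -scaleN1r ipZl mulN1r. Qed.
Lemma ipNr u w : ip w (- u) = - ip w u.
Proof. by rewrite ip_sym ipNl cjN -ip_sym. Qed.
Lemma ipBl u v w : ip (u - v) w = ip u w - ip v w.
Proof. by rewrite ipDl ipNl. Qed.
Lemma ipBr u v w : ip w (u - v) = ip w u - ip w v.
Proof. by rewrite ipDr ipNr. Qed.

Lemma N_ge0 v : 0 <= N v. Proof. exact: sqrtr_ge0. Qed.
Lemma N2 v : N v ^+ 2 = Re (ip v v).
Proof. by rewrite /ipnorm sqr_sqrtr //; case: (ip_pos v). Qed.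
Lemma ip_vv v : ip v v = ((N v ^+ 2)%:C)%C.
Proof. rewrite N2; case: (ip_pos v); case: (ip v v) => a b /= -> _ //. Qed.
Lemma N_eq0 v : N v = 0 -> v = 0.
Proof. by move=> h; apply: ip_def; rewrite ip_vv h expr0n. Qed.
Lemma Nzero : N 0 = 0.
Proof. by rewrite /ipnorm ip0l /= sqrtr0. Qed.

Lemma N2D u v : N (u + v) ^+ 2 = N u ^+ 2 + N v ^+ 2 + 2 * Re (ip u v).
Proof.
rewrite !N2 ipDl !ipDr !ReD [ip v u]ip_sym ReJ. ring.
Qed.
Lemma N2Z c v : N (c *: v) ^+ 2 = cabs c ^+ 2 * N v ^+ 2.
Proof.
rewrite !N2 ipZl ipZr mulrA mulcJ ReRM //.
Qed.
Lemma NZ c v : N (c *: v) = cabs c * N v.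
Proof.
apply/eqP; rewrite -(@eqrXn2 _ 2) ?N_ge0 ?mulr_ge0 ?cabs_ge0 ?N_ge0 //.
by rewrite N2Z exprMn.
Qed.
Lemma NN v : N (- v) = N v.
Proof. by rewrite -scaleN1r NZ cabsN cabsR normr1 mul1r. Qed.

Lemma CS u v : cabs (ip u v) <= N u * N v.
Proof.
have [v0|vn0] := eqVneq v 0; first by rewrite v0 ip0r cabs0 Nzero mulr0.
have Nv : 0 < N v.
  by rewrite lt_neqAle N_ge0 andbT; apply/eqP => h; rewrite (N_eq0 (esym h)) eqxx in vn0.
set z := ip u v.
set t := (N v ^+ 2)^-1.
have h := N2D u ((- ((t%:C)%C * z)) *: v).
have : 0 <= N (u + (- ((t%:C)%C * z)) *: v) ^+ 2 by apply: sqr_ge0.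
rewrite h N2Z ipZr cabsN cabsM cabsR -/z.
rewrite (ReX t z) => h2.
apply: le_sq; rewrite ?mulr_ge0 ?N_ge0 ?cabs_ge0 //.
have ht : t * N v ^+ 2 = 1 by rewrite mulVf // expf_neq0 // gt_eqF.
have tge : 0 <= t by rewrite invr_ge0 sqr_ge0.
rewrite ger0_norm // in h2.
have : 0 <= (N u ^+ 2 + (t * cabs z) ^+ 2 * N v ^+ 2 + 2 * (- t * cabs z ^+ 2)) * N v ^+ 2.
  by rewrite mulr_ge0 // sqr_ge0.
have -> : (N u ^+ 2 + (t * cabs z) ^+ 2 * N v ^+ 2 + 2 * (- t * cabs z ^+ 2)) * N v ^+ 2
  = N u ^+ 2 * N v ^+ 2 + cabs z ^+ 2 * (t * N v ^+ 2) ^+ 2 - 2 * cabs z ^+ 2 * (t * N v ^+ 2).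
  ring.
rewrite ht expr1n mulr1 exprMn; lra.
Qed.

Lemma ND u v : N (u + v) <= N u + N v.
Proof.
apply: le_sq; first by rewrite addr_ge0 ?N_ge0.
rewrite N2D sqrrD.
have := le_trans (Re_le_cabs (ip u v)) (CS u v); rewrite mulr2n; lra.
Qed.
Lemma NB u v : N (u - v) = N (v - u).
Proof. by rewrite -NN opprB. Qed.
Lemma para u v : N (u + v) ^+ 2 + N (u - v) ^+ 2 = 2 * N u ^+ 2 + 2 * N v ^+ 2.
Proof. rewrite !N2D NN ipNr. have -> : Re (- ip u v) = - Re (ip u v) by case: (ip u v). ring. Qed.

Definition conv (x : nat -> V) l := forall e, 0 < e -> exists N0, forall n, (N0 <= n)%N -> N (x n - l) < e.
Definition closedS (M : set V) := forall x l, (forall n, M (x n)) -> conv x l -> M l.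
Definition subsp (M : set V) := M 0 /\ (forall c u v, M u -> M v -> M (c *: u + v)).

Lemma subspZ M c u : subsp M -> M u -> M (c *: u).
Proof. by case=> h0 h hu; have := h c u 0 hu h0; rewrite addr0. Qed.
Lemma subspD M u v : subsp M -> M u -> M v -> M (u + v).
Proof. by case=> h0 h hu hv; have := h 1 u v hu hv; rewrite scale1r. Qed.

Lemma lt_sq (a b : R) : 0 <= b -> a ^+ 2 < b ^+ 2 -> a < b.
Proof.
move=> hb h; case: (lerP a 0) => ha.
  by apply: le_lt_trans ha _; rewrite lt_neqAle hb andbT; apply/eqP => hb0; rewrite -hb0 expr0n /= in h; move: h; rewrite ltNge sqr_ge0.
by rewrite -(@ltr_pXn2r _ 2) // nnegrE ltW.
Qed.

Lemma N2C (w : V) : N ((2 : C) *: w) = 2 * N w.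
Proof.
have -> : (2 : C) = ((2 : R)%:C)%C.
  by apply/eqP; rewrite eq_complex /= addr0 eqxx /=; apply/eqP.
by rewrite NZ cabsR ger0_norm.
Qed.

Lemma proj (hc : ip_complete ip) (M : set V) x : subsp M -> closedS M -> ~ M x ->
  exists y : V, y <> 0 /\ forall m, M m -> ip m y = 0.
Proof.
move=> sM cM nMx.
set E := [set N (x - m) | m in M].
have M0 : M 0 by case: sM.
have E0 : E (N (x - 0)) by exists 0.
have hlb : has_lbound E by exists 0 => _ [m _ <-]; exact: N_ge0.
have hinf : has_inf E by split; [exists (N (x - 0)) | ].
set d := inf E.
have d_lb : forall m, M m -> d <= N (x - m).
  by move=> m hm; apply: (ge_inf hlb); exists m.
have d0 : 0 <= d by apply: lb_le_inf; [exists (N (x - 0)) | move=> _ [m _ <-]; apply: N_ge0].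
have : forall n : nat, exists m, M m /\ N (x - m) < d + (n.+1%:R)^-1.
  by move=> n; have [e [m hm <-] he] := inf_adherent (inv_pos n) hinf; exists m.
move=> /choice [ms hms].
have key : forall n k, N (ms n - ms k) ^+ 2 <= 2 * (2 * d + 1) * ((n.+1%:R)^-1 + (k.+1%:R)^-1).
  move=> n k.
  set a := ms n; set b := ms k.
  have [Ma ha] := hms n; have [Mb hb] := hms k.
  have hmid : M ((2^-1 : C) *: a + (2^-1 : C) *: b).
    by apply: subspD => //; apply: subspZ.
  have hp := para (x - b) (x - a).
  have e1 : x - b + (x - a) = (2 : C) *: (x - ((2^-1 : C) *: a + (2^-1 : C) *: b)).
    rewrite scalerBr scalerDr !scalerA mulfV ?scale1r; last by rewrite pnatr_eq0.
    by rewrite scaler_nat mulr2n opprD addrACA; congr (_ + _); rewrite addrC.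
  have e2 : x - b - (x - a) = a - b.
    by rewrite opprB addrC addrA subrK.
  rewrite e1 e2 N2C in hp.
  have hm := d_lb _ hmid.
  have hn := inv_le1 n; have hk := inv_le1 k; have hn0 := inv_pos n; have hk0 := inv_pos k.
  have hxa := N_ge0 (x - a); have hxb := N_ge0 (x - b).
  have sa : N (x - a) ^+ 2 <= (d + (n.+1%:R)^-1) ^+ 2.
    by apply: sqle => //; apply: ltW.
  have sb : N (x - b) ^+ 2 <= (d + (k.+1%:R)^-1) ^+ 2.
    by apply: sqle => //; apply: ltW.
  have sm : d ^+ 2 <= N (x - ((2^-1 : C) *: a + (2^-1 : C) *: b)) ^+ 2.
    by apply: sqle.
  move: hp sa sb sm; set A := N (x - _); set i1 := (n.+1%:R)^-1; set i2 := (k.+1%:R)^-1.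
  move=> hp sa sb sm.
  have : i1 ^+ 2 <= i1 by rewrite expr2 ler_piMl // ltW.
  have : i2 ^+ 2 <= i2 by rewrite expr2 ler_piMl // ltW.
  rewrite !sqrrD in sa sb; rewrite exprMn in hp. nra.
have cau : forall e, 0 < e -> exists N0, forall m n, (N0 <= m)%N -> (N0 <= n)%N -> N (ms m - ms n) < e.
  move=> e he.
  have hd1 : 0 < 4 * (2 * d + 1) by lra.
  have hq : 0 < e ^+ 2 / (4 * (2 * d + 1)) by rewrite divr_gt0 ?exprn_gt0.
  have [k hk] := small_inv hq.
  exists k => m n hm hn; apply: lt_sq; first exact: ltW.
  apply: le_lt_trans (key m n) _.
  have h1 := inv_mono hm; have h2 := inv_mono hn.
  have hd : 0 < 2 * d + 1 by lra.
  rewrite ltr_pdivlMr ?mulr_gt0 // in hk.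
  move: hk h1 h2 hd; set i := (k.+1%:R)^-1; set i1 := (m.+1%:R)^-1; set i2 := (n.+1%:R)^-1.
  move=> hk h1 h2 hd; nra.
have [p hp] := hc ms cau.
have Mp : M p by apply: (cM ms) => // n; case: (hms n).
have Np : N (x - p) <= d.
  apply/ler_addgt0Pr => e he.
  have he2 : 0 < e / 2 by rewrite divr_gt0.
  have [n0 hn0] := hp _ he2.
  have [k hk] := small_inv he2.
  set n := maxn n0 k.
  have h1 := hn0 n (leq_maxl _ _).
  have h2 := inv_mono (leq_maxr n0 k).
  have [_ h3] := hms n.
  have : x - p = (x - ms n) + (ms n - p) by rewrite addrA subrK.
  move=> ->; apply: le_trans (ND _ _) _.
  move: h1 h2 h3 hk; rewrite -/n; set i := (n.+1%:R)^-1; set j := (k.+1%:R)^-1; move=> h1 h2 h3 hk.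
  lra.
exists (x - p); split.
  by move=> /eqP; rewrite subr_eq0 => /eqP hx; apply: nMx; rewrite hx.
move=> m hm.
set y := x - p; set z := ip y m.
set t := (N m ^+ 2 + 1)^-1.
have ht0 : 0 < t by rewrite invr_gt0; have := sqr_ge0 (N m); lra.
have hM : M (p + ((t%:C)%C * z) *: m) by apply: subspD => //; apply: subspZ.
have hd := d_lb _ hM.
have ey : x - (p + ((t%:C)%C * z) *: m) = y + (- ((t%:C)%C * z)) *: m.
  by rewrite opprD addrA scaleNr.
rewrite ey in hd.
have hsq : N y ^+ 2 <= N (y + (- ((t%:C)%C * z)) *: m) ^+ 2.
  by apply: sqle; [apply: N_ge0 | apply: le_trans Np hd].
rewrite N2D N2Z ipZr ReX cabsN cabsM cabsR in hsq. rewrite (ger0_norm (ltW ht0)) in hsq.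
have htm : t * N m ^+ 2 < 1.
  by rewrite /t mulrC ltr_pdivrMr ?ltr_pwDr ?sqr_ge0 // mul1r ltrDl.
have hz2 : cabs z ^+ 2 <= 0.
  have hs := sqr_ge0 (cabs z).
  move: hsq htm ht0 hs; set s := cabs z ^+ 2; set A := N m ^+ 2; move=> hsq htm ht0 hs.
  rewrite exprMn in hsq.
  have h1 : 0 <= t * (s * (t * A - 2)).
    have -> : t * (s * (t * A - 2)) = t ^+ 2 * s * A + 2 * (- t * s) by ring.
    by move: hsq; rewrite -addrA lerDl.
  rewrite pmulr_rge0 // in h1.
  have h2 : t * A - 2 < 0 by lra.
  have h3 : s * (t * A - 2) <= 0 by apply: mulr_ge0_le0 => //; apply: ltW.
  have /eqP : s * (t * A - 2) = 0 by apply/eqP; rewrite eq_le h3 h1.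
  by rewrite mulf_eq0 (lt_eqF h2) orbF => /eqP ->.
have : cabs z = 0.
  by apply/eqP; rewrite -(@eqrXn2 _ 2) ?cabs_ge0 // expr0n /= eq_le hz2 sqr_ge0.
move=> /cabs_eq0 hz0.
by rewrite ip_sym -/y -/z hz0 cj0.
Qed.

Section Anti.
Variable f : V -> C.
Hypothesis hf : cantilinear f.
Lemma af0 : f 0 = 0.
Proof.
have := hf 1 0 0; rewrite /cconj scale1r addr0 cj1 mul1r => h.
by apply/esym/(addrI (f 0)); rewrite addr0 {1}h.
Qed.
Lemma afZ c u : f (c *: u) = conjc c * f u.
Proof. by have := hf c u 0; rewrite /cconj addr0 af0 addr0. Qed.
Lemma afD u v : f (u + v) = f u + f v.
Proof. by have := hf 1 u v; rewrite /cconj scale1r cj1 mul1r. Qed.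
Lemma afB u v : f (u - v) = f u - f v.
Proof. by rewrite afD -scaleN1r afZ cjN cj1 mulN1r. Qed.
End Anti.

Lemma conv_small (x : nat -> V) l e : conv x l -> 0 < e -> exists n0, forall n, (n0 <= n)%N -> N (x n - l) < e.
Proof. by move=> h he; apply: h. Qed.

Lemma riesz (hc : ip_complete ip) (f : V -> C) : cantilinear f ->
  (exists K, forall v, cabs (f v) <= K * N v) -> exists q, forall v, f v = ip q v.
Proof.
move=> hf [K hK].
set M := [set v | f v = 0].
have sM : subsp M.
  split; first exact: af0.
  by move=> c u v; rewrite /M /= => hu hv; rewrite hf hu hv mulr0 addr0.
have cM : closedS M.
  move=> x l hx hxl; rewrite /M /=; apply: cabs_eq0; apply/eqP; rewrite eq_le cabs_ge0 andbT.
  apply: le0_eps => e he.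
  have hK1 : 0 < `|K| + 1 by rewrite ltr_pwDr ?normr_ge0.
  have [n0 hn0] := hxl (e / (`|K| + 1)) (divr_gt0 he hK1).
  have := hn0 n0 (leqnn n0).
  have -> : f l = f (l - x n0) by rewrite (afB hf) hx subr0.
  move=> hlt; apply: le_trans (hK _) _; rewrite NB.
  apply: le_trans (ler_wpM2r (N_ge0 _) (ler_norm K)) _.
  have hN := N_ge0 (x n0 - l).
  rewrite ltr_pdivlMr // in hlt.
  have := normr_ge0 K; nra.
have [all0|/existsNP [v0 nv0]] := pselect (forall v, M v) ; last first.
  have [y [y0 hy]] := proj hc sM cM nv0.
  have fy : f y <> 0 by move=> h; apply: y0; apply: ip_def; apply: hy.
  have Y0 : ip y y != 0 by apply/eqP => h; apply: y0; apply: ip_def.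
  exists ((f y / ip y y) *: y) => v.
  set m := conjc (f v) *: y + (- conjc (f y)) *: v.
  have Mm : M m by rewrite /M /= hf /cconj (afZ hf) !cjN !cjK; ring.
  have := hy m Mm; rewrite ipDl !ipZl => h.
  have h2 := congr1 conjc h; rewrite cjD !cjM cjN !cjK cj0 -!ip_sym in h2.
  idtac.
  have e : f v * ip y y = f y * ip y v.
    by apply/eqP; rewrite -subr_eq0; apply/eqP; rewrite -h2; ring.
  apply: (mulIf Y0); rewrite e; field; exact: Y0.
exists 0 => v; rewrite ip0l; exact: all0.
Qed.

Section Sesq.
Variable t : V -> V -> C.
Hypothesis ht1 : forall w, clinear (fun u => t u w).
Lemma st0 w : t 0 w = 0.
Proof.
have /= := ht1 w 1 0 0; rewrite !scale1r addr0 => h.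
by apply/esym/(addrI (t 0 w)); rewrite addr0 {1}h.
Qed.
Lemma stZ c u w : t (c *: u) w = c * t u w.
Proof. by have /= := ht1 w c u 0; rewrite addr0 st0 addr0 scaleC. Qed.
Lemma stD u v w : t (u + v) w = t u w + t v w.
Proof. by have /= := ht1 w 1 u v; rewrite !scale1r. Qed.
Lemma stB u v w : t (u - v) w = t u w - t v w.
Proof. by rewrite stD -scaleN1r stZ mulN1r. Qed.
End Sesq.

Lemma laxmilgram (hc : ip_complete ip) (t : V -> V -> C) (c0 Ct : R) :
  (forall w, clinear (fun u => t u w)) -> (forall u, cantilinear (t u)) ->
  (forall u v, cabs (t u v) <= Ct * N u * N v) -> 0 < c0 ->
  (forall v, c0 * N v ^+ 2 <= cabs (t v v)) ->
  forall f, cantilinear f -> (exists K, forall v, cabs (f v) <= K * N v) ->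
  exists w, forall v, t w v = f v.
Proof.
move=> ht1 ht2 htb hc0 hcoer f hf hfb.
have rep : forall u, exists q, forall v, t u v = ip q v.
  by move=> u; apply: riesz => //; exists (Ct * N u) => v; apply: htb.
set M := [set q | exists u, forall v, t u v = ip q v].
have sM : subsp M.
  split; first by exists 0 => v; rewrite (st0 ht1) ip0l.
  move=> c q1 q2 [u1 h1] [u2 h2]; exists (c *: u1 + u2) => v.
  by rewrite (stD ht1) (stZ ht1) h1 h2 ipDl ipZl.
have bb : forall u q, (forall v, t u v = ip q v) -> c0 * N u <= N q.
  move=> u q hq.
  have h1 := hcoer u; rewrite hq in h1.
  have h2 := le_trans h1 (CS q u).
  have [Nu0|Nup] := eqVneq (N u) 0; first by rewrite Nu0 mulr0 N_ge0.
  have Nup' : 0 < N u by rewrite lt_neqAle eq_sym Nup N_ge0.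
  by rewrite expr2 mulrA ler_pM2r // in h2.
have cM : closedS M.
  move=> x l hx hxl.
  have [us hus] := choice hx.
  have cau : forall e, 0 < e -> exists N0, forall m n, (N0 <= m)%N -> (N0 <= n)%N -> N (us m - us n) < e.
    move=> e he.
    have he2 : 0 < c0 * e / 2 by rewrite divr_gt0 // mulr_gt0.
    have [n0 hn0] := hxl _ he2.
    exists n0 => m n hm hn.
    have hd : forall v, t (us m - us n) v = ip (x m - x n) v.
      by move=> v; rewrite (stB ht1) ipBl !hus.
    have := bb _ _ hd.
    have : x m - x n = (x m - l) + (- (x n - l)) by rewrite opprB addrA subrK.
    move=> ->; move=> hb; have := le_trans hb (ND _ _); rewrite NN.
    have := hn0 m hm; have := hn0 n hn; have := N_ge0 (us m - us n).
    move=> h0 h1 h2 h3.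
    have h4 : c0 * N (us m - us n) < c0 * e by lra.
    by rewrite ltr_pM2l in h4.
  have [u hu] := hc us cau.
  exists u => v; apply/eqP; rewrite -subr_eq0; apply/eqP; apply: cabs_eq0.
  apply/eqP; rewrite eq_le cabs_ge0 andbT; apply: le0_eps => e he.
  set K := 2 * ((`|Ct| + 1) * (N v + 1)).
  have hK : 0 < K.
    have := normr_ge0 Ct; have := N_ge0 v => ha hb.
    by rewrite mulr_gt0 // mulr_gt0 //; lra.
  have [n1 hn1] := hu _ (divr_gt0 he hK).
  have [n2 hn2] := hxl _ (divr_gt0 he hK).
  set n := maxn n1 n2.
  have a1 := hn1 n (leq_maxl _ _); have a2 := hn2 n (leq_maxr _ _).
  have -> : t u v - ip l v = t (u - us n) v + ip (x n - l) v.
    by rewrite (stB ht1) hus ipBl; ring.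
  apply: le_trans (cabsD _ _) _.
  have b1 := htb (u - us n) v; rewrite NB in b1.
  have b2 := CS (x n - l) v.
  have c1 := ler_norm Ct.
  have p1 := N_ge0 (us n - u); have p2 := N_ge0 (x n - l); have p3 := N_ge0 v.
  have p4 := normr_ge0 Ct.
  rewrite ltr_pdivlMr // /K in a1 a2.
  have q1 : Ct * N (us n - u) * N v <= `|Ct| * N (us n - u) * N v.
    by rewrite ler_wpM2r // ler_wpM2r.
  set a := N (us n - u) in a1 b1 p1 q1 *; set b := N (x n - l) in a2 b2 p2 *.
  set c := `|Ct| in a1 a2 q1 p4 *; set nv := N v in a1 a2 b1 b2 p3 q1 *.
  have r1 : c * a * nv <= a * ((c + 1) * (nv + 1)).
    have -> : a * ((c + 1) * (nv + 1)) = c * a * nv + a * (c + nv + 1) by ring.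
    by rewrite lerDl mulr_ge0 // addr_ge0 // addr_ge0.
  have r2 : b * nv <= b * ((c + 1) * (nv + 1)).
    have -> : b * ((c + 1) * (nv + 1)) = b * nv + b * (c * nv + c + 1) by ring.
    by rewrite lerDl mulr_ge0 // addr_ge0 // addr_ge0 // mulr_ge0.
  rewrite ltr_pdivlMr // in a2; lra.
have allM : forall q, M q.
  move=> q; apply: contrapT => nq.
  have [y [y0 hy]] := proj hc sM cM nq.
  have [qy hqy] := rep y.
  have := hy qy (ex_intro _ y hqy); rewrite -hqy => hyy.
  have := hcoer y; rewrite hyy cabs0 => h.
  apply: y0; apply: N_eq0; apply/eqP; rewrite -(@eqrXn2 _ 2) ?N_ge0 // expr0n /=.
  by rewrite eq_le sqr_ge0 andbT -(pmulr_rle0 _ hc0).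
have [qf hqf] := riesz hc hf hfb.
have [w hw] := allM qf.
by exists w => v; rewrite hw hqf.
Qed.

End IP.
End S.

Section Main.
Variable R : realType.
Local Notation C := R[i].
Variables (V V0 : lmodType C) (ipH : V -> V -> C) (ip0 : V0 -> V0 -> C).
Hypotheses (hH : inner_product ipH) (hHc : ip_complete ipH) (hH0 : inner_product ip0).
Variables (J D : V -> V0).
Hypotheses (hJlin : clinear J) (hJinj : injective J)
  (hJnorm : forall v, ipnorm ip0 (J v) <= ipnorm ipH v)
  (hDlin : clinear D) (hDnorm : forall v, ipnorm ip0 (D v) <= ipnorm ipH v).
Variable b : V -> V -> C.
Hypotheses (hb1 : forall w, clinear (fun u => b u w)) (hb2 : forall u, cantilinear (b u)).
Variable Cb : R.
Hypothesis hb3 : forall u v, cabs (b u v) <= Cb * ipnorm ipH u * ipnorm ipH v.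
Variables (mu ep : V0 -> V0) (Mmu Mep : R).
Hypotheses (hmul : clinear mu) (hmub : forall x, ipnorm ip0 (mu x) <= Mmu * ipnorm ip0 x)
  (hepl : clinear ep) (hepb : forall x, ipnorm ip0 (ep x) <= Mep * ipnorm ip0 x).
Variables (c1 c2 : R).
Hypotheses (hc1 : 0 < c1) (hc2 : 0 < c2).
Local Notation a := (aform ip0 J D b mu ep).
Hypothesis hG : forall v, cabs (a v v + ((c2 * ipnorm ip0 (J v) ^+ 2)%:C)%C) >= c1 * ipnorm ipH v ^+ 2.
Variable Ainv : (V -> C) -> V.
Hypotheses (hA1 : forall f, in_dual ipH f -> (fun v => a (Ainv f) v) = f)
  (hA2 : forall u, Ainv (fun v => a u v) = u).
Variable MA : R.
Hypothesis hA3 : forall f, in_dual ipH f -> ipnorm ipH (Ainv f) <= MA * dual_norm ipH f.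

Local Notation NH := (ipnorm ipH).
Local Notation N0 := (ipnorm ip0).

Lemma a_lin w : clinear (fun u => a u w).
Proof.
move=> c u u'; rewrite /aform /=.
rewrite (linD hDlin) (linZ hDlin) (linD hmul) (linZ hmul) (ipDl hH0) (ipZl hH0).
rewrite (linD hJlin) (linZ hJlin) (linD hepl) (linZ hepl) (ipDl hH0) (ipZl hH0).
have /= -> := hb1 w c u u'. rewrite !scaleC. ring.
Qed.

Lemma a_anti u : cantilinear (a u).
Proof.
move=> c v v'; rewrite /aform /=.
rewrite (linD hDlin) (linZ hDlin) (ipDr hH0) (ipZr hH0).
rewrite (linD hJlin) (linZ hJlin) (ipDr hH0) (ipZr hH0).
rewrite hb2 /cconj. ring.
Qed.

Definition Ca := `|Mmu| + `|Cb| + `|Mep|.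
Lemma Ca_ge0 : 0 <= Ca.
Proof. by rewrite /Ca !addr_ge0 ?normr_ge0. Qed.

Lemma bnd_op (F : V0 -> V0) (MF : R) (G : V -> V0) u v :
  (forall x, N0 (F x) <= MF * N0 x) -> (forall v, N0 (G v) <= NH v) ->
  cabs (ip0 (F (G u)) (G v)) <= `|MF| * NH u * NH v.
Proof.
move=> hF hGn; apply: le_trans (CS hH0 _ _) _.
apply: ler_pM; rewrite ?N_ge0 //.
apply: le_trans (hF _) _; apply: le_trans (ler_wpM2r (N_ge0 _ _) (ler_norm MF)) _.
by apply: ler_wpM2l; rewrite ?normr_ge0.
Qed.

Lemma a_bnd u v : cabs (a u v) <= Ca * NH u * NH v.
Proof.
rewrite /aform; apply: le_trans (cabsD _ _) _; rewrite cabsN.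
apply: le_trans (lerD (cabsD _ _) (lexx _)) _.
have h1 := bnd_op u v hmub hDnorm.
have h3 := bnd_op u v hepb hJnorm.
have h2 : cabs (b u v) <= `|Cb| * NH u * NH v.
  apply: le_trans (hb3 u v) _; rewrite -!mulrA; apply: ler_wpM2r; last exact: ler_norm.
  by rewrite mulr_ge0 ?N_ge0.
rewrite /Ca !mulrDl; lra.
Qed.

Lemma a0 v : a 0 v = 0.
Proof. exact: (st0 a_lin). Qed.

Lemma Ainv0 : Ainv (fun _ => 0) = 0.
Proof.
have -> : (fun _ : V => (0 : C)) = (fun v => a 0 v) by apply: funext => v; rewrite a0.
exact: hA2.
Qed.

Lemma AinvP f : in_dual ipH f -> forall v, a (Ainv f) v = f v.
Proof. by move=> hf v; rewrite -[in RHS](hA1 hf). Qed.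

Lemma embed_dual g : in_dual ipH (embed0 ip0 J g).
Proof.
split.
  move=> c v v'; rewrite /embed0 (linD hJlin) (linZ hJlin) (ipDr hH0) (ipZr hH0) //.
exists (N0 g) => v; rewrite /embed0; apply: le_trans (CS hH0 _ _) _.
by apply: ler_wpM2l; rewrite ?N_ge0.
Qed.

Lemma NH_pos v : v <> 0 -> 0 < NH v.
Proof. by move=> hv; rewrite lt_neqAle N_ge0 andbT eq_sym; apply/eqP => h; apply: hv; exact: (N_eq0 hH h). Qed.
Lemma N0_pos g : g <> 0 -> 0 < N0 g.
Proof. by move=> hv; rewrite lt_neqAle N_ge0 andbT eq_sym; apply/eqP => h; apply: hv; exact: (N_eq0 hH0 h). Qed.

Lemma dn_ge0 f : 0 <= dual_norm ipH f.
Proof. by apply: sup_ge0 => v _; rewrite divr_ge0 ?cabs_ge0 ?N_ge0. Qed.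

Lemma dn_el f v : in_dual ipH f -> v <> 0 -> cabs (f v) / NH v <= dual_norm ipH f.
Proof.
move=> [hf [K hK]] hv; rewrite /dual_norm.
apply: (@le_sup_el _ _ [set v | v <> 0] (fun v => cabs (f v) / NH v) `|K| v) => // w hw.
rewrite ler_pdivrMr ?NH_pos //; apply: le_trans (hK w) _.
by apply: ler_wpM2r; rewrite ?N_ge0 ?ler_norm.
Qed.

Lemma dn_bound f v : in_dual ipH f -> cabs (f v) <= dual_norm ipH f * NH v.
Proof.
move=> hf; have [->|hv] := eqVneq v 0.
  by rewrite (af0 hf.1) cabs0 mulr_ge0 ?dn_ge0 ?N_ge0.
have hv' : v <> 0 by apply/eqP.
by rewrite -ler_pdivrMr ?NH_pos //; apply: dn_el.
Qed.

Lemma dn_embed g : dual_norm ipH (embed0 ip0 J g) <= N0 g.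
Proof.
apply: sup_le_M; first exact: N_ge0.
move=> v hv; rewrite ler_pdivrMr ?NH_pos //; rewrite /embed0.
apply: le_trans (CS hH0 _ _) _; apply: ler_wpM2l; rewrite ?N_ge0 //.
Qed.

Lemma dn_pos f : in_dual ipH f -> f <> (fun _ => 0) -> 0 < dual_norm ipH f.
Proof.
move=> hf hne.
have [v hv] : exists v, f v <> 0.
  apply: contrapT => hn; apply: hne; apply: funext => v; apply: contrapT => h; apply: hn; by exists v.
have v0 : v <> 0 by move=> e; apply: hv; rewrite e (af0 hf.1).
apply: lt_le_trans (dn_el hf v0); rewrite divr_gt0 ?NH_pos //.
rewrite lt_neqAle cabs_ge0 andbT eq_sym; apply/eqP => h; apply: hv; exact: cabs_eq0.
Qed.

Lemma Ainv_bnd f : in_dual ipH f -> NH (Ainv f) <= `|MA| * dual_norm ipH f.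
Proof.
move=> hf; apply: le_trans (hA3 hf) _; apply: ler_wpM2r; rewrite ?dn_ge0 ?ler_norm //.
Qed.


Definition t u v := a u v + ((c2%:C)%C) * ip0 (J u) (J v).

Lemma t_lin w : clinear (fun u => t u w).
Proof.
move=> c u u'; rewrite /t /=.
have /= -> := a_lin w c u u'.
rewrite (linD hJlin) (linZ hJlin) (ipDl hH0) (ipZl hH0) !scaleC; ring.
Qed.

Lemma t_anti u : cantilinear (t u).
Proof.
move=> c v v'; rewrite /t /= (a_anti u).
rewrite (linD hJlin) (linZ hJlin) (ipDr hH0) (ipZr hH0) /cconj; ring.
Qed.

Lemma t_bnd u v : cabs (t u v) <= (Ca + c2) * NH u * NH v.
Proof.
rewrite /t; apply: le_trans (cabsD _ _) _; rewrite cabsM cabsR (ger0_norm (ltW hc2)).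
have h1 := a_bnd u v.
have h2 : cabs (ip0 (J u) (J v)) <= NH u * NH v.
  apply: le_trans (CS hH0 _ _) _; apply: ler_pM; rewrite ?N_ge0 //.
have h3 : c2 * cabs (ip0 (J u) (J v)) <= c2 * (NH u * NH v) by apply: ler_wpM2l => //; apply: ltW.
have -> : (Ca + c2) * NH u * NH v = Ca * NH u * NH v + c2 * (NH u * NH v) by ring.
lra.
Qed.

Lemma t_coer v : c1 * NH v ^+ 2 <= cabs (t v v).
Proof. by rewrite /t (ip_vv hH0) realCM; exact: hG. Qed.

Lemma solve f : in_dual ipH f -> exists w, forall v, t w v = f v.
Proof. move=> [hf hb]; exact: (laxmilgram hH hHc t_lin t_anti t_bnd hc1 t_coer hf hb). Qed.

Local Notation ndH := (opnorm_dual_H ipH Ainv).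
Local Notation n0H := (opnorm_0_H ipH ip0 J Ainv).
Local Notation n00 := (opnorm_0_0 ip0 J Ainv).

Lemma r0H_bnd g : g <> 0 -> NH (Ainv (embed0 ip0 J g)) / N0 g <= `|MA|.
Proof.
move=> hg; rewrite ler_pdivrMr ?N0_pos //; apply: le_trans (Ainv_bnd (embed_dual g)) _.
exact: (ler_wpM2l (normr_ge0 _) (dn_embed g)).
Qed.

Lemma n0H_ge0 : 0 <= n0H.
Proof. by apply: sup_ge0 => g _; rewrite divr_ge0 ?N_ge0. Qed.
Lemma n00_ge0 : 0 <= n00.
Proof. by apply: sup_ge0 => g _; rewrite divr_ge0 ?N_ge0. Qed.
Lemma ndH_ge0 : 0 <= ndH.
Proof. by apply: sup_ge0 => g _; rewrite divr_ge0 ?N_ge0 ?dn_ge0. Qed.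

Lemma n0H_el g : g <> 0 -> NH (Ainv (embed0 ip0 J g)) / N0 g <= n0H.
Proof.
move=> hg; rewrite /opnorm_0_H.
exact: (@le_sup_el _ _ [set g | g <> 0] (fun g => NH (Ainv (embed0 ip0 J g)) / N0 g) `|MA| g r0H_bnd).
Qed.

Lemma r00_bnd g : g <> 0 -> N0 (J (Ainv (embed0 ip0 J g))) / N0 g <= `|MA|.
Proof.
move=> hg; apply: le_trans (r0H_bnd hg); apply: ler_wpM2r; rewrite ?invr_ge0 ?N_ge0 //.
Qed.

Lemma n00_el g : g <> 0 -> N0 (J (Ainv (embed0 ip0 J g))) / N0 g <= n00.
Proof.
move=> hg; rewrite /opnorm_0_0.
exact: (@le_sup_el _ _ [set g | g <> 0] (fun g => N0 (J (Ainv (embed0 ip0 J g))) / N0 g) `|MA| g r00_bnd).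
Qed.

Lemma rdH_bnd f : in_dual ipH f -> NH (Ainv f) / dual_norm ipH f <= `|MA|.
Proof.
move=> hf; have [d0|dn0] := eqVneq (dual_norm ipH f) 0.
  by rewrite d0 invr0 mulr0 normr_ge0.
have dp : 0 < dual_norm ipH f by rewrite lt_neqAle eq_sym dn0 dn_ge0.
by rewrite ler_pdivrMr //; apply: Ainv_bnd.
Qed.

Lemma ndH_el f : in_dual ipH f -> f <> (fun _ => 0) -> NH (Ainv f) / dual_norm ipH f <= ndH.
Proof.
move=> hf hn; rewrite /opnorm_dual_H.
apply: (@le_sup_el _ _ [set f | in_dual ipH f /\ f <> (fun _ => 0)]
   (fun f => NH (Ainv f) / dual_norm ipH f) `|MA| f) => //.
by move=> f' [hf' _]; apply: rdH_bnd.
Qed.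

Lemma embed00 : embed0 ip0 J 0 = (fun _ => 0).
Proof. by apply: funext => v; rewrite /embed0 (ip0l hH0). Qed.

Lemma ineq1 : n0H <= ndH.
Proof.
apply: sup_le_M; first exact: ndH_ge0.
move=> g hg.
set h := embed0 ip0 J g.
have [h0|hn0] := pselect (h = fun _ => 0).
  by rewrite h0 Ainv0 (Nzero hH) mul0r ndH_ge0.
have hd := dn_pos (embed_dual g) hn0.
apply: le_trans (ndH_el (embed_dual g) hn0).
apply: ler_wpM2l; first exact: N_ge0.
by rewrite lef_pV2 ?posrE ?N0_pos //; apply: dn_embed.
Qed.

Lemma ineq2 : ndH <= c1^-1 * (1 + c2 * n0H).
Proof.
have hr : 0 <= c1^-1 * (1 + c2 * n0H).
  have := n0H_ge0; have := hc2; have := invr_gt0 c1; rewrite hc1 => h1 h2 h3.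
  apply: mulr_ge0; [exact: ltW | nra].
apply: sup_le_M => // f [hf hfn].
have [w hw] := solve hf.
have hwb : c1 * NH w <= dual_norm ipH f.
  have h1 := t_coer w; rewrite hw in h1; have h2 := le_trans h1 (dn_bound w hf).
  have [Nw0|Nwn] := eqVneq (NH w) 0; first by rewrite Nw0 mulr0 dn_ge0.
  have Nwp : 0 < NH w by rewrite lt_neqAle eq_sym Nwn N_ge0.
  by rewrite expr2 mulrA ler_pM2r // in h2.
set k := Ainv (embed0 ip0 J (J w)).
have hk : forall v, a k v = ip0 (J w) (J v) by move=> v; rewrite (AinvP (embed_dual (J w))).
have hAf : Ainv f = w + ((c2%:C)%C) *: k.
  rewrite -[w + _]hA2; congr Ainv; apply: funext => v.
  rewrite addrC; have /= -> := a_lin v ((c2%:C)%C) k w.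
  by rewrite hk -hw /t scaleC addrC.
have hkb : NH k <= n0H * NH w.
  have [Jw0|Jwn] := eqVneq (J w) 0.
    by rewrite /k Jw0 embed00 Ainv0 (Nzero hH) mulr_ge0 ?n0H_ge0 ?N_ge0.
  have Jwn' : J w <> 0 by apply/eqP.
  have := n0H_el Jwn'; rewrite -/k ler_pdivrMr ?N0_pos // => h.
  apply: le_trans h _; apply: ler_wpM2l; rewrite ?n0H_ge0 //.
have hdp := dn_pos hf hfn.
rewrite ler_pdivrMr // hAf.
apply: le_trans (ND hH _ _) _; rewrite (NZ hH) cabsR (ger0_norm (ltW hc2)).
have hc1i : c1^-1 * dual_norm ipH f >= NH w.
  by rewrite -(ler_pM2l hc1) mulrA mulfV ?gt_eqF // mul1r.
have := n0H_ge0; have := N_ge0 ipH w; have := N_ge0 ipH k.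
move: hc1i hkb; set A := c1^-1 * dual_norm ipH f; set n := n0H.
have -> : c1^-1 * (1 + c2 * n) * dual_norm ipH f = A * (1 + c2 * n) by rewrite /A; ring.
move=> hc1i hkb h1 h2 h3.
have h4 : c2 * NH k <= c2 * (n * NH w) by apply: ler_wpM2l => //; apply: ltW.
have h5 : c2 * (n * NH w) <= c2 * (n * A).
  by apply: ler_wpM2l; [apply: ltW | apply: ler_wpM2l].
nra.
Qed.

Lemma ineq3 : n00 <= n0H.
Proof.
apply: sup_le_M; first exact: n0H_ge0.
move=> g hg; apply: le_trans (n0H_el hg).
by apply: ler_wpM2r; rewrite ?invr_ge0 ?N_ge0 ?hJnorm.
Qed.

Lemma ineq4 : n0H <= (Num.sqrt c1)^-1 * n00 * Num.sqrt (c2 + n00^-1).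
Proof.
set B := _ * _ * _.
have hB : 0 <= B by rewrite /B !mulr_ge0 ?invr_ge0 ?sqrtr_ge0 ?n00_ge0.
have hB2 : B ^+ 2 = c1^-1 * (n00 + c2 * n00 ^+ 2).
  have hq : 0 <= c2 + n00^-1 by rewrite addr_ge0 ?invr_ge0 ?n00_ge0 // ltW.
  rewrite /B !exprMn exprVn (sqr_sqrtr (ltW hc1)) (sqr_sqrtr hq).
  have [z|nz] := eqVneq n00 0; first by rewrite z invr0 expr0n /=; ring.
  have e : n00 ^+ 2 * n00^-1 = n00 by rewrite expr2 -mulrA mulfV // mulr1.
  by rewrite -mulrA mulrDr e; congr (_ * _); rewrite addrC mulrC.
rewrite /opnorm_0_H; apply: (@sup_le_M _ _ [set g : V0 | g <> 0] (fun g => NH (Ainv (embed0 ip0 J g)) / N0 g) B hB) => g hg.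
set u := Ainv (embed0 ip0 J g).
have hu : forall v, a u v = ip0 g (J v) by move=> v; rewrite (AinvP (embed_dual g)).
have h1 := hG u; rewrite hu in h1.
have h2 : cabs (ip0 g (J u) + ((c2 * N0 (J u) ^+ 2)%:C)%C) <= N0 g * N0 (J u) + c2 * N0 (J u) ^+ 2.
  have hpos : 0 <= c2 * N0 (J u) ^+ 2 by rewrite mulr_ge0 ?sqr_ge0 // ltW.
  apply: le_trans (cabsD _ _) _; rewrite cabsR (ger0_norm hpos).
  by rewrite lerD2r; apply: CS.
have hgp := N0_pos hg.
have h3 : N0 (J u) <= n00 * N0 g by rewrite -ler_pdivrMr //; apply: n00_el.
have h4 := le_trans h1 h2.
apply: le_sq => //; rewrite hB2 expr_div_n ler_pdivrMr ?exprn_gt0 //.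
have hJu := N_ge0 ip0 (J u); have hn := n00_ge0.
have h5 : N0 g * N0 (J u) + c2 * N0 (J u) ^+ 2 <= N0 g * (n00 * N0 g) + c2 * (n00 * N0 g) ^+ 2.
  apply: lerD; first by apply: ler_wpM2l; rewrite ?N_ge0.
  by apply: ler_wpM2l; [apply: ltW | apply: sqle].
have h6 := le_trans h4 h5.
rewrite -(ler_pM2l hc1) [X in _ <= X]mulrA [c1 * (c1^-1 * _)]mulrA mulfV ?gt_eqF // mul1r.
apply: le_trans h6 _; rewrite le_eqVlt; apply/orP; left; apply/eqP; ring.
Qed.

End Main.

Local Close Scope classical_set_scope.
Unset Implicit Arguments. Set Strict Implicit. Set Printing Implicit Defensive.

Theorem lemma3p2 (R : realType)
  (* Hilbert spaces H (carrier V) and H0 (carrier V0), inclusion J : H -> H0 *)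
  (V V0 : lmodType R[i]) (ipH : V -> V -> R[i]) (ip0 : V0 -> V0 -> R[i])
  (hH : hilbert ipH) (hH0 : hilbert ip0)
  (J : V -> V0) (hJlin : clinear J) (hJinj : injective J)
  (hJnorm : forall v, ipnorm ip0 (J v) <= ipnorm ipH v)
  (* D : H -> H0 linear with norm <= 1 *)
  (D : V -> V0) (hDlin : clinear D)
  (hDnorm : forall v, ipnorm ip0 (D v) <= ipnorm ipH v)
  (* b continuous sesquilinear form on H *)
  (b : V -> V -> R[i])
  (hb1 : forall w, clinear (fun u => b u w))
  (hb2 : forall u, cantilinear (b u))
  (hb3 : exists Cb : R, forall u v,
      cabs (b u v) <= Cb * ipnorm ipH u * ipnorm ipH v)
  (* mu_l^{-1}, eps_l : H0 -> H0 bounded linear, l = 1, 2 *)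
  (muinv eps : nat -> V0 -> V0)
  (hmu : forall l, (l = 1 \/ l = 2)%N -> bounded_op ip0 ip0 (muinv l))
  (heps : forall l, (l = 1 \/ l = 2)%N -> bounded_op ip0 ip0 (eps l))
  (* Garding-type inequalities *)
  (CG1 CG2 : nat -> R)
  (hCG1 : forall l, (l = 1 \/ l = 2)%N -> 0 < CG1 l)
  (hCG2 : forall l, (l = 1 \/ l = 2)%N -> 0 < CG2 l)
  (hG : forall l, (l = 1 \/ l = 2)%N -> forall v : V,
      cabs (aform ip0 J D b (muinv l) (eps l) v v
            + ((CG2 l * ipnorm ip0 (J v) ^+ 2)%:C)%C)
      >= CG1 l * ipnorm ipH v ^+ 2)
  (* the statement, for a given l in {1,2} *)
  (l : nat) (hl : (l = 1 \/ l = 2)%N)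
  (* A_l^{-1} : H^* -> H exists (as a bounded operator) *)
  (Ainv : (V -> R[i]) -> V)
  (hAinv1 : forall f, in_dual ipH f ->
      (fun v => aform ip0 J D b (muinv l) (eps l) (Ainv f) v) = f)
  (hAinv2 : forall u, Ainv (fun v => aform ip0 J D b (muinv l) (eps l) u v) = u)
  (hAinvb : exists M : R, forall f, in_dual ipH f ->
      ipnorm ipH (Ainv f) <= M * dual_norm ipH f) :
  let ndH := opnorm_dual_H ipH Ainv in
  let n0H := opnorm_0_H ipH ip0 J Ainv in
  let n00 := opnorm_0_0 ip0 J Ainv in
  (n0H <= ndH /\ ndH <= (CG1 l)^-1 * (1 + CG2 l * n0H)) /\
  (n00 <= n0H /\
   n0H <= (Num.sqrt (CG1 l))^-1 * n00 * Num.sqrt (CG2 l + n00^-1)).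
Proof.
move=> ndH n0H n00.
have [hHi hHc] := hH; have [hH0i _] := hH0.
have [Cb hCb] := hb3.
have [hmul [Mmu hmub]] := hmu l hl.
have [hepl [Mep hepb]] := heps l hl.
have [MA hMA] := hAinvb.
have hc1 := hCG1 l hl; have hc2 := hCG2 l hl; have hGl := hG l hl.
split; split.
- exact: (ineq1 hHi hH0i hJlin hJnorm hDlin hb1 hmul hepl hAinv2 hMA).
- exact: (ineq2 hHi hHc hH0i hJlin hJnorm hDlin hDnorm hb1 hb2 hCb hmul hmub hepl hepb hc1 hc2 hGl hAinv1 hAinv2 hMA).
- exact: (ineq3 hHi hH0i hJlin hJnorm hMA).
- exact: (ineq4 hHi hH0i hJlin hJnorm hc1 hc2 hGl hAinv1 hMA).
Qed.
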